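(* Let $C\ge 1$ and $t>0$. Suppose each of $C$ recruitment centres has been open for the same time $t$, so that $t_1=\dots=t_C=t$, and let $n_1,\dots,n_C$ be the observed recruitment counts, with $N_\bullet=\sum_{c=1}^C n_c$. Consider the log-likelihood (up to an additive constant) \[ \ell(\alpha,\beta)=C\alpha\log\beta-\sum_{c=1}^C(\alpha+n_c)\log(\beta+t_c)-C\log\Gamma(\alpha)+\sum_{c=1}^C\log\Gamma(\alpha+n_c),\qquad \alpha,\beta>0. \] Then the maximum likelihood estimator $(\widehat\alpha,\widehat\beta)$ maximising $\ell$ satisfies $\widehat\alpha/\widehat\beta=N_\bullet/(Ct)$.
   Context: This is the marginal log-likelihood of the Poisson–Gamma recruitment model: the centre rates $\lambda_1,\dots,\lambda_C$ are independent $\mathsf{Gam}(\alpha,\beta)$ (shape $\alpha$, rate $\beta$, density $\beta^\alpha\lambda^{\alpha-1}e^{-\beta\lambda}/\Gamma(\alpha)$), and given $\lambda_c$ the count $n_c$ at centre $c$ is Poisson with mean $\lambda_c t_c$, where $t_c$ is the time centre $c$ has been open. *)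

(* Defs.v *)
From Stdlib Require Import Reals List.
From Coquelicot Require Import Coquelicot.
Open Scope R_scope.

Definition Gamma (a : R) : R :=
  RInt_gen (fun x => Rpower x (a - 1) * exp (- x)) (at_right 0) (Rbar_locally p_infty).

Definition sumC (C : nat) (f : nat -> R) : R :=
  fold_right Rplus 0 (map f (seq 0 C)).

(* Poisson-Gamma marginal log-likelihood (up to an additive constant),
   C centres, opening times tc c, counts n c. *)
Definition loglik (C : nat) (tc : nat -> R) (n : nat -> nat) (a b : R) : R :=
  INR C * a * ln b
  - sumC C (fun c => (a + INR (n c)) * ln (b + tc c))
  - INR C * ln (Gamma a)
  + sumC C (fun c => ln (Gamma (a + INR (n c)))).

Definition is_MLE (C : nat) (tc : nat -> R) (n : nat -> nat) (a b : R) : Prop :=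
  0 < a /\ 0 < b /\
  forall a' b', 0 < a' -> 0 < b' -> loglik C tc n a' b' <= loglik C tc n a b.

(* Main.v *)
Require Import Defs.
From Stdlib Require Import Reals List Lra Lia.
From Coquelicot Require Import Coquelicot.
Open Scope R_scope.

Lemma fold_lin (a k : R) (x : nat -> R) (l : list nat) :
  fold_right Rplus 0 (map (fun c => (a + x c) * k) l) =
  (INR (length l) * a + fold_right Rplus 0 (map x l)) * k.
Proof.
  induction l as [|c l IH]; cbn [map fold_right length].
  - simpl. ring.
  - rewrite IH, S_INR. ring.
Qed.

Lemma sumC_ext (C : nat) (f g : nat -> R) :
  (forall c, (c < C)%nat -> f c = g c) -> sumC C f = sumC C g.
Proof.
  intros H. unfold sumC. f_equal. apply map_ext_in.
  intros c Hc. apply List.in_seq in Hc. apply H. lia.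
Qed.

Theorem lemma1 (C : nat) (t : R) (tc : nat -> R) (n : nat -> nat) (ahat bhat : R) :
  (1 <= C)%nat -> 0 < t ->
  (forall c, (c < C)%nat -> tc c = t) ->
  is_MLE C tc n ahat bhat ->
  ahat / bhat = sumC C (fun c => INR (n c)) / (INR C * t).
Proof.
  intros HC Ht Htc [Ha [Hb Hmax]].
  set (N := sumC C (fun c => INR (n c))).
  set (K := - INR C * ln (Gamma ahat) + sumC C (fun c => ln (Gamma (ahat + INR (n c))))).
  set (h := fun b => INR C * ahat * ln b - (INR C * ahat + N) * ln (b + t)).
  assert (Hl : forall b, loglik C tc n ahat b = h b + K).
  { intros b. unfold loglik, h, K.
    rewrite (sumC_ext C (fun c => (ahat + INR (n c)) * ln (b + tc c))
                        (fun c => (ahat + INR (n c)) * ln (b + t))).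
    2: { intros c Hc. rewrite Htc; auto. }
    unfold sumC at 1. rewrite fold_lin, length_seq. unfold N, sumC. ring. }
  assert (HN : 0 <= N).
  { unfold N, sumC. induction (seq 0 C); simpl. lra.
    pose proof (pos_INR (n a)). lra. }
  assert (HCpos : 1 <= INR C) by (apply (le_INR 1); auto).
  assert (Hd : is_derive h bhat (INR C * ahat / bhat - (INR C * ahat + N) / (bhat + t))).
  { unfold h. auto_derive. lra. field. lra. }
  apply is_derive_Reals in Hd.
  assert (pr : derivable_pt h bhat) by (exists (INR C * ahat / bhat - (INR C * ahat + N) / (bhat + t)); exact Hd).
  pose proof (deriv_maximum h 0 (bhat + 1) bhat pr Hb ltac:(lra)) as Hm.
  assert (Hz : derive_pt h bhat pr = 0).
  { apply Hm. intros x Hx _. pose proof (Hmax ahat x Ha Hx). rewrite !Hl in H. lra. }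
  rewrite (derive_pt_eq_0 _ _ _ pr Hd) in Hz.
  assert (Heq : INR C * ahat * t = N * bhat).
  { assert (INR C * ahat * (bhat + t) = (INR C * ahat + N) * bhat).
    { apply Rminus_diag_uniq.
      replace (INR C * ahat * (bhat + t) - (INR C * ahat + N) * bhat)
        with ((INR C * ahat / bhat - (INR C * ahat + N) / (bhat + t)) * (bhat * (bhat + t))) by (field; lra).
      rewrite Hz. ring. }
    lra. }
  fold N. apply (Rmult_eq_reg_r (bhat * (INR C * t))).
  2: { apply Rgt_not_eq. apply Rmult_lt_0_compat; [lra|nra]. }
  field_simplify; try lra; try nra. 
Qed.
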